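(* Let $b\ge 2$ and $n\ge 0$ be integers. If $x\in T_b(n)$ and $x\not\equiv 0 \pmod{s_0}$, then $x-(b-1)\in T_b(n)$.
   Context: For integers $b\ge 2$, $n\ge 0$, $i\ge0$ put $s_i=(b+1)b^{n+i}-1$ and $T_b(n)=\langle\{s_i:i\in\mathbb{N}\}\rangle$, the submonoid of $(\mathbb{N},+)$ generated by the $s_i$ (equivalently, by $s_0,\dots,s_{n+1}$). *)

(* Defs.v *)
From mathcomp Require Import all_boot.
Set Implicit Arguments.
Unset Strict Implicit.
Unset Printing Implicit Defensive.

Definition s (b n i : nat) : nat := (b + 1) * b ^ (n + i) - 1.

Inductive inT (b n : nat) : nat -> Prop :=
  | inT0 : inT b n 0
  | inT_gen : forall i, inT b n (s b n i)
  | inT_add : forall x y, inT b n x -> inT b n y -> inT b n (x + y).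

(* Main.v *)
Require Import Defs.
From mathcomp Require Import all_boot.
From mathcomp Require Import zify.

Lemma inT_mul b n k y : inT b n y -> inT b n (k * y).
Proof.
move=> hy; elim: k => [|k IH]; first by rewrite mul0n; apply: inT0.
by rewrite mulSn; apply: inT_add.
Qed.

Lemma decomp b n x : inT b n x ->
  (exists k, x = k * s b n 0) \/ (exists j y, inT b n y /\ x = s b n j.+1 + y).
Proof.
elim => [|i|x1 y hx [[k1 e1]|[j [z [hz e1]]]] hy [[k2 e2]|[j2 [z2 [hz2 e2]]]]].
- by left; exists 0.
- case: i => [|j]; first by left; exists 1; rewrite mul1n.
  by right; exists j, 0; split; [apply: inT0 | rewrite addn0].
- by left; exists (k1 + k2); rewrite e1 e2 mulnDl.
- right; exists j2, (x1 + z2); split; first by apply: inT_add.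
  by rewrite e2; lia.
- right; exists j, (z + y); split; first by apply: inT_add.
  by rewrite e1; lia.
- right; exists j, (z + y); split; first by apply: inT_add.
  by rewrite e1; lia.
Qed.

Theorem mainTheorem7 (b n x : nat) (hb : 2 <= b) :
  inT b n x -> x %% s b n 0 != 0 -> inT b n (x - (b - 1)).
Proof.
move=> /decomp [[k ->]|[j [y [hy ->]]]].
  by rewrite modnMl eqxx.
have -> : s b n j.+1 + y - (b - 1) = b * s b n j + y.
  rewrite /s (addnS n j) expnS.
  have hP : 0 < b ^ (n + j) by rewrite expn_gt0; lia.
  move: hP; set P := b ^ (n + j) => hP.
  nia.
move=> _; apply: inT_add hy; exact: (@inT_mul b n b _ (inT_gen b n j)).
Qed.
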